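(* Let $(X,\tau)$ be a Hausdorff extended locally convex space having a neighborhood of $0_X$ that is bounded in $(X,\tau)$. Then there exists an extended norm $\|\cdot\|$ on $X$ with $X_{fin}=\{x\in X:\|x\|<\infty\}$ such that the topology induced by $\|\cdot\|$ (the metric-type topology with basic neighborhoods $\{y:\|y-x\|<\varepsilon\}$) equals $\tau$.
   Context: An extended seminorm on a vector space $X$ over $\mathbb{R}$ or $\mathbb{C}$ is a map $\rho:X\to[0,\infty]$ with $\rho(\alpha x)=|\alpha|\rho(x)$ and $\rho(x+y)\le\rho(x)+\rho(y)$; it is an extended norm if $\rho(x)=0$ only for $x=0_X$. An extended locally convex space $(X,\tau)$ is a vector space with the topology induced by a family $\{\rho_i\}$ of extended seminorms (neighborhood base at $x_0$: $\{x:\max_{i\in J}\rho_i(x-x_0)<\varepsilon\}$, $J$ finite, $\varepsilon>0$). $X_{fin}=\{x\in X:\rho(x)<\infty$ for every $\tau$-continuous extended seminorm $\rho\}$. A set $A\subseteq X$ is bounded in $(X,\tau)$ if for every neighborhood $U$ of $0_X$ there exist $c>0$ and a finite set $P\subseteq A$ with $A\subseteq P+cU$. *)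

(* Defs.v *)
From Stdlib Require List.
From HB Require Import structures.
From mathcomp Require Import all_boot all_order all_algebra.
From mathcomp Require Import all_classical all_reals all_analysis.
From mathcomp Require Import complex.
Set Implicit Arguments. Unset Strict Implicit. Unset Printing Implicit Defensive.
Import Order.TTheory GRing.Theory Num.Theory.
Local Open Scope classical_set_scope.
Local Open Scope ring_scope.

(* Generic development over a scalar ring K (to be instantiated with K = R or
   K = R[i]), with absolute value abs : K -> R and the embedding emb : R -> K
   of the (positive) reals used for the dilation c U. *)
Section ELCS.
Variables (R : realType) (K : nzRingType) (abs : K -> R) (emb : R -> K).
Variable X : lmodType K.

Definition ext_seminorm (rho : X -> \bar R) : Prop :=
  [/\ (forall x, (0 <= rho x)%E),
      (forall (a : K) (x : X), rho (a *: x) = ((abs a)%:E * rho x)%E) &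
      (forall x y, (rho (x + y)%R <= rho x + rho y)%E)].

Definition ext_norm (rho : X -> \bar R) : Prop :=
  ext_seminorm rho /\ (forall x, rho x = 0%E -> x = 0).

Definition elcs_open (I : Type) (rho : I -> X -> \bar R) (U : set X) : Prop :=
  forall x0, U x0 -> exists (J : seq I) (eps : R), 0 < eps /\
    [set x | forall i, List.In i J -> (rho i (x - x0)%R < eps%:E)%E] `<=` U.

Definition elcs_nbhd (I : Type) (rho : I -> X -> \bar R) (x : X) (U : set X)
  : Prop := exists V, [/\ elcs_open rho V, V x & V `<=` U].

Definition elcs_hausdorff (I : Type) (rho : I -> X -> \bar R) : Prop :=
  forall x y : X, x <> y -> exists U V,
    [/\ elcs_open rho U, elcs_open rho V, U x, V y & U `&` V = set0].

Definition elcs_continuous (I : Type) (rho : I -> X -> \bar R)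
  (f : X -> \bar R) : Prop :=
  forall W : set (\bar R), open W -> elcs_open rho (f @^-1` W).

Definition X_fin (I : Type) (rho : I -> X -> \bar R) : set X :=
  [set x | forall f : X -> \bar R, ext_seminorm f -> elcs_continuous rho f ->
           (f x < +oo)%E].

Definition elcs_bounded (I : Type) (rho : I -> X -> \bar R) (A : set X)
  : Prop :=
  forall U, elcs_nbhd rho 0 U -> exists (c : R) (P : seq X),
    [/\ 0 < c, (forall p, p \in P -> A p) &
        A `<=` [set x | exists p u, [/\ p \in P, U u & x = p + emb c *: u]]].

End ELCS.

(* Main.v *)
Require Import Defs.
From HB Require Import structures.
From mathcomp Require Import all_boot all_order all_algebra.
From mathcomp Require Import all_classical all_reals all_analysis.
From mathcomp Require Import complex.
From mathcomp Require Import ring lra.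
Import Order.TTheory GRing.Theory Num.Theory.
Local Open Scope classical_set_scope.
Local Open Scope ring_scope.
Set Implicit Arguments. Unset Strict Implicit. Unset Printing Implicit Defensive.

Section Gen.
Variables (R : realType) (K : nzRingType) (abs : K -> R) (emb : R -> K).
Hypotheses (embB : forall a b, emb (a - b) = emb a - emb b)
 (embM : forall a b, emb (a * b) = emb a * emb b) (emb1 : emb 1 = 1)
 (absE : forall a, abs (emb a) = `|a|) (abs_ge0 : forall a, 0 <= abs a).
Variable X : lmodType K.

Lemma emb0 : emb 0 = 0.
Proof. by rewrite -(subrr 0) embB subrr. Qed.

Lemma embN1 : emb (-1) = -1.
Proof. by rewrite -sub0r embB emb0 emb1 sub0r. Qed.

Section SN.
Variable f : X -> \bar R.
Hypothesis hf : ext_seminorm abs f.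

Lemma sn_ge0 x : (0 <= f x)%E.
Proof. by case: hf. Qed.

Lemma snZ t x : 0 <= t -> f (emb t *: x) = (t%:E * f x)%E.
Proof. by case: hf => _ H _ t0; rewrite H absE ger0_norm. Qed.

Lemma sn0 : f 0 = 0%E.
Proof. by rewrite -(scale0r 0) -emb0 snZ // mul0e. Qed.

Lemma snN x : f (- x) = f x.
Proof. by case: hf => _ H _; rewrite -scaleN1r -embN1 H absE normrN normr1 mul1e. Qed.

Lemma snD x y : (f (x + y) <= f x + f y)%E.
Proof. by case: hf. Qed.

Lemma snB x y : f (x - y) = f (y - x).
Proof. by rewrite -snN opprB. Qed.

End SN.
Lemma sn_scale (f g : X -> \bar R) (hf : ext_seminorm abs f) (hg : ext_seminorm abs g) (A B : R) : 0 < A -> 0 < B ->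
  (forall x, (g x < A%:E)%E -> (f x < B%:E)%E) ->
  forall s, 0 < s -> forall x, (g x < (A * s)%:E)%E -> (f x < (B * s)%:E)%E.
Proof.
move=> A0 B0 H s s0 x gx.
have sV0 : 0 <= s^-1 by rewrite invr_ge0 ltW.
have := H (emb s^-1 *: x).
rewrite (snZ hf _ sV0) (snZ hg _ sV0) => {}H.
rewrite mulrC EFinM -lte_pdivrMl // H //.
by rewrite lte_pdivrMl // -EFinM mulrC.
Qed.

Lemma maxeZ (c : R) (u v : \bar R) : 0 <= c ->
  (c%:E * Order.max u v = Order.max (c%:E * u) (c%:E * v))%E.
Proof.
move=> c0; case: (leP u v) => h.
  by rewrite max_r // lee_wpmul2l // lee_fin.
by rewrite max_l // lee_wpmul2l ?lee_fin // ltW.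
Qed.

Variables (I : Type) (rho : I -> X -> \bar R).
Hypothesis rhoS : forall i, ext_seminorm abs (rho i).

Definition nrm (J : seq I) (x : X) : \bar R :=
  foldr (fun i acc => Order.max (rho i x) acc) 0%E J.

Lemma nrm_lt J x (e : \bar R) : (0 < e)%E ->
  (nrm J x < e)%E <-> (forall i, List.In i J -> (rho i x < e)%E).
Proof.
move=> e0; elim: J => [|j J IH] /=; first by split.
rewrite gt_max; split.
- by move=> /andP[h1 /IH h2] i [<-|/h2].
- move=> H; apply/andP; split; first by apply: H; left.
  by apply/IH => i hi; apply: H; right.
Qed.

Lemma nrm_sn J : ext_seminorm abs (nrm J).
Proof.
split.
- move=> x; elim: J => [|j J IH] //=; by rewrite le_max IH orbT.
- move=> a x; elim: J => [|j J IH] /=; first by rewrite mule0.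
  case: (rhoS j) => _ H _; rewrite H IH maxeZ //.
- move=> x y; elim: J => [|j J IH] /=; first by rewrite adde0.
  rewrite ge_max; apply/andP; split.
  + apply: le_trans (snD (rhoS j) x y) _; apply: leeD; rewrite le_max lexx //.
  + apply: le_trans IH _; apply: leeD; rewrite le_max lexx orbT //.
Qed.

Lemma sn_cont (f : X -> \bar R) : ext_seminorm abs f ->
  (forall e : R, 0 < e -> exists (J : seq I) (eps : R), 0 < eps /\
     forall z, (forall i, List.In i J -> (rho i z < eps%:E)%E) -> (f z < e%:E)%E) ->
  elcs_continuous rho f.
Proof.
move=> hf H W oW x0 Wx0.
have : nbhs (f x0) W by apply: open_nbhs_nbhs; split.
have h1 (x : X) : (f x <= f (x - x0)%R + f x0)%E by have := snD hf (x - x0) x0; rewrite subrK.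
have h2 (x : X) : (f x0 <= f x + f (x - x0)%R)%E.
  by have := snD hf x (x0 - x); rewrite addrC subrK snB.
move: (sn_ge0 hf x0) Wx0 h1 h2.
case Ef : (f x0) => [r| |] // r0 Wx0 h1 h2.
- move=> /= HW. rewrite /nbhs /= in HW. move: HW => /nbhs_ballP [e /= e0 He].
  have [J [eps [eps0 HJ]]] := H e e0.
  exists J, eps; split => // x Hx; rewrite /preimage /=.
  move: (HJ _ Hx) (h1 x) (h2 x).
  case: (f (x - x0)) (sn_ge0 hf (x - x0)) => [d| |] //= d0 fx.
  case: (f x) (sn_ge0 hf x) => [y| |] //= y0 g1 g2.
  apply: He; rewrite /ball /=.
  rewrite !lee_fin lte_fin in d0 y0 g1 g2 fx.
  rewrite ltr_norml; apply/andP; split; lra.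
- move=> _.
  have [J [eps [eps0 HJ]]] := H 1 ltr01.
  exists J, eps; split => // x Hx; rewrite /preimage /=.
  move: (HJ _ Hx) (h2 x).
  case: (f (x - x0)) (sn_ge0 hf (x - x0)) => [d| |] //= d0 fx.
  case: (f x) => [y| |] h; [by move: h; rewrite -EFinD leNgt ltry | by move: Wx0; rewrite /preimage /= Ef | by move: h].
Qed.

Lemma ball_open k (e : R) : elcs_open rho [set y | (rho k y < e%:E)%E].
Proof.
move=> x0 /=.
case Er : (rho k x0) (sn_ge0 (rhoS k) x0) => [r| |] //= r0 re.
exists [:: k], (e - r); split; first by rewrite lte_fin in re; lra.
move=> x /= Hx; have := snD (rhoS k) (x - x0) x0; rewrite subrK Er => h.
apply: le_lt_trans h _.
move: (Hx k (or_introl erefl)) (sn_ge0 (rhoS k) (x - x0)).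
case: (rho k (x - x0)) => [d| |] //= hd _.
rewrite lte_fin in hd; rewrite lte_fin; lra.
Qed.

Section Key.
Variables (U : set X) (Ubd : elcs_bounded emb rho U) (J : seq I) (eps : R).
Hypotheses (eps0 : 0 < eps)
  (HV : [set x | forall i, List.In i J -> (rho i (x - 0) < eps%:E)%E] `<=` U).

Lemma key k : exists A : R, 0 < A /\ forall t, 0 < t -> forall x,
  (nrm J x < (A * t)%:E)%E -> (rho k x < t%:E)%E.
Proof.
have [c [P [c0 _ HP]]] : exists (c : R) (P : seq X),
    [/\ 0 < c, (forall p, p \in P -> U p) &
        U `<=` [set x | exists p u, [/\ p \in P, (rho k u < 1%:E)%E & x = p + emb c *: u]]].
  apply: Ubd; exists [set y | (rho k y < 1%:E)%E]; split => //.
    exact: ball_open.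
  by rewrite /= sn0 // lte_fin ltr01.
set m := size P.
have main : forall x, (nrm J x < (eps / (m.+1)%:R)%:E)%E -> (rho k x < (2 * c)%:E)%E.
  move=> x.
  case Enx: (nrm J x) (sn_ge0 (nrm_sn J) x) => [r| |] //= r0 hx.
  rewrite lee_fin in r0; rewrite lte_fin ltr_pdivlMr ?ltr0n // in hx.
  have inU : forall j : 'I_m.+1, U (emb j%:R *: x).
    move=> j; apply: HV => i iJ; rewrite subr0.
    apply: (nrm_lt J _ _).1 => //.
    rewrite snZ ?ler0n //; last exact: nrm_sn.
    rewrite Enx -EFinM lte_fin.
    have jm : (j%:R : R) <= m%:R by rewrite ler_nat -ltnS ltn_ord.
    move: hx; rewrite -natr1; nra.
  have cell : forall j : 'I_m.+1, exists i : 'I_m, exists u,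
      (rho k u < 1%:E)%E /\ emb j%:R *: x = nth 0 P i + emb c *: u.
    move=> j; have [p [u [pP Wu E]]] := HP _ (inU j).
    have im : (index p P < m)%N by rewrite index_mem.
    by exists (Ordinal im), u; split => //; rewrite /= nth_index.
  have [g Hg] := choice cell.
  have [j1 [j2 [e12 ne]]] : exists j1 j2 : 'I_m.+1, g j1 = g j2 /\ j1 <> j2.
    apply: contrapT => H.
    have inj : injective g.
      by move=> a b eab; apply: contrapT => nab; apply: H; exists a, b.
    by have := leq_card _ inj; rewrite !card_ord ltnn.
  wlog lt12 : j1 j2 e12 ne / (j1 < j2)%N.
    move=> Hw; case: (ltngtP j1 j2) => h.
    - exact: (Hw j1 j2).
    - by apply: (Hw j2 j1) => // E; apply: ne.
    - by exfalso; apply: ne; apply: val_inj.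
  have [u1 [W1 E1]] := Hg j1; have [u2 [W2 E2]] := Hg j2.
  have Ediff : emb (j2%:R - j1%:R) *: x = emb c *: (u2 - u1).
    by rewrite embB scalerBl E1 E2 e12 opprD addrACA subrr add0r scalerBr.
  have d1 : 1 <= (j2%:R - j1%:R : R).
    by rewrite lerBrDr addrC natr1 ler_nat.
  have := congr1 (rho k) Ediff.
  rewrite snZ //; last by lra.
  rewrite snZ //; last by apply: ltW.
  move=> E.
  have hx1 : (rho k x <= (j2%:R - j1%:R)%:E * rho k x)%E.
    by apply: lee_pemull; [exact: sn_ge0 | rewrite lee_fin].
  apply: le_lt_trans hx1 _.
  rewrite E (mulrC 2 c) EFinM lte_pmul2l // ?lte_fin //.
  apply: le_lt_trans (snD (rhoS k) u2 (- u1)) _.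
  by rewrite snN // (_ : 2%:E = 1%:E + 1%:E)%E ?lteD // -EFinD.
have Ap : 0 < eps / (m.+1)%:R by rewrite divr_gt0 ?ltr0n.
exists (eps / (m.+1)%:R / (2 * c)); split.
  by rewrite divr_gt0 // mulr_gt0.
move=> t t0 x hx.
have c2 : 0 < 2 * c by rewrite mulr_gt0.
have s0 : 0 < t / (2 * c) by rewrite divr_gt0.
have := sn_scale (rhoS k) (nrm_sn J) Ap c2 main s0 (x := x).
have -> : 2 * c * (t / (2 * c)) = t by field; lra.
apply; move: hx; congr (_ < _%:E)%E; field; apply/andP; split; rewrite ?pnatr_eq0 //; lra.
Qed.
End Key.

Lemma main_gen : elcs_hausdorff rho ->
  (exists U, elcs_nbhd rho 0 U /\ elcs_bounded emb rho U) ->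
  exists nrm0 : X -> \bar R,
    [/\ ext_norm abs nrm0, X_fin abs rho = [set x | (nrm0 x < +oo)%E] &
         forall U : set X, elcs_open (fun _ : unit => nrm0) U <-> elcs_open rho U].
Proof.
move=> hH [U [[V [oV V0 VU]] Ubd]].
have [J [eps [eps0 HJ]]] := oV 0 V0.
have HV : [set x | forall i, List.In i J -> (rho i (x - 0) < eps%:E)%E] `<=` U.
  by move=> x /HJ /VU.
have keyJ : forall (J' : seq I) (e : R), 0 < e -> exists a : R, 0 < a /\
    forall z, (nrm J z < a%:E)%E -> forall k, List.In k J' -> (rho k z < e%:E)%E.
  move=> J' e e0; elim: J' => [|k J' [a [a0 Ha]]].
    by exists 1; split => // z _ k [].
  have [A [A0 HA]] := key Ubd eps0 HV k.
  exists (Num.min a (A * e)); split; first by rewrite lt_min a0 mulr_gt0.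
  move=> z hz k' [<-|kJ'].
    apply: HA => //; apply: lt_le_trans hz _; rewrite lee_fin ge_min lexx orbT //.
  apply: Ha => //; apply: lt_le_trans hz _; rewrite lee_fin ge_min lexx //.
exists (nrm J); split.
- split; first exact: nrm_sn.
  move=> x Nx0; apply: contrapT => xn0.
  have [W1 [W2 [oW1 oW2 W1x W20 disj]]] := hH x 0 xn0.
  have [J' [e [e0 HJ']]] := oW2 0 W20.
  have [a [a0 Ha]] := keyJ J' e e0.
  have W2x : W2 x.
    by apply: HJ' => i iJ; rewrite subr0; apply: Ha => //; rewrite Nx0 lte_fin.
  have : (W1 `&` W2) x by split.
  by rewrite disj.
- apply/seteqP; split => x.
  + move=> Hx; apply: Hx; first exact: nrm_sn.
    apply: sn_cont; first exact: nrm_sn.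
    move=> e e0; exists J, e; split => // z hz.
    by apply/(nrm_lt _ _ _).2 => //; rewrite lte_fin.
  + move=> /= Nx f hf fc.
    have oW : open [set y : \bar R | (y < 1%:E)%E] by apply: open_ereal_lt_ereal.
    have f0 : (f @^-1` [set y : \bar R | (y < 1%:E)%E]) 0.
      by rewrite /preimage /= sn0 // lte_fin ltr01.
    have [J' [e [e0 HJ']]] := fc _ oW 0 f0.
    have [a [a0 Ha]] := keyJ J' e e0.
    case EN: (nrm J x) Nx (sn_ge0 (nrm_sn J) x) => [r| |] // _ r0.
    rewrite lee_fin in r0.
    have t0 : 0 < a / (r + 1) by rewrite divr_gt0 //; lra.
    have : (f (emb (a / (r + 1)) *: x) < 1%:E)%E.
      apply: HJ' => i iJ; rewrite subr0; apply: Ha => //.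
      rewrite snZ; [|exact: nrm_sn|exact: ltW].
      rewrite EN -EFinM lte_fin mulrAC ltr_pdivrMr; nra.
    rewrite snZ //; last exact: ltW.
    rewrite ltey; apply: contraTN => /eqP ->.
    by rewrite mulry gtr0_sg // mul1e.
- move=> W; split.
  + move=> oW x0 Wx0; have [J'' [e [e0 H]]] := oW x0 Wx0.
    exists J, e; split => // x hx; apply: H => i _.
    by apply/(nrm_lt _ _ _).2 => //; rewrite lte_fin.
  + move=> oW x0 Wx0; have [J' [e [e0 H]]] := oW x0 Wx0.
    have [a [a0 Ha]] := keyJ J' e e0.
    exists [:: tt], a; split => // x hx; apply: H => i iJ; apply: Ha => //.
    by apply: hx; left.
Qed.
End Gen.

Theorem theorem5p8 (R : realType) :
  (forall (X : lmodType R) (I : Type) (rho : I -> X -> \bar R),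
     (forall i, ext_seminorm (fun a : R => `|a|) (rho i)) ->
     elcs_hausdorff rho ->
     (exists U, elcs_nbhd rho 0 U /\ elcs_bounded (fun c : R => c) rho U) ->
     exists nrm : X -> \bar R,
       [/\ ext_norm (fun a : R => `|a|) nrm,
           X_fin (fun a : R => `|a|) rho = [set x | (nrm x < +oo)%E] &
           forall U : set X,
             elcs_open (fun _ : unit => nrm) U <-> elcs_open rho U])
  /\
  (forall (X : lmodType R[i]) (I : Type) (rho : I -> X -> \bar R),
     (forall i, ext_seminorm (@Normc.normc R) (rho i)) ->
     elcs_hausdorff rho ->
     (exists U, elcs_nbhd rho 0 U /\
                elcs_bounded (fun c : R => (c%:C)%C) rho U) ->
     exists nrm : X -> \bar R,
       [/\ ext_norm (@Normc.normc R) nrm,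
           X_fin (@Normc.normc R) rho = [set x | (nrm x < +oo)%E] &
           forall U : set X,
             elcs_open (fun _ : unit => nrm) U <-> elcs_open rho U]).
Proof.
split.
- move=> X I rho rhoS hH hB.
  apply: (main_gen (abs := fun a : R => `|a|) (emb := fun c : R => c)) => //.
- move=> X I rho rhoS hH hB.
  apply: (main_gen (abs := @Normc.normc R) (emb := fun c : R => (c%:C)%C)) => //.
  all: try (by move=> a b; rewrite ?rmorphB ?rmorphM).
  all: try (by move=> a; rewrite /Normc.normc /= expr0n /= addr0 sqrtr_sqr).
  all: try (by case=> a b; apply: sqrtr_ge0).
  all: try by rewrite rmorph1.
Qed.
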